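(* Let $n\geq1$, $1\leq k\leq n$, and let $\eta_k=(z_k,d_{k,0},\ldots,d_{k,r})$ be as constructed below; write $v_i=v_{i,\eta_k}$ and $r_i=r_{i,\eta_k}$. Then: (1) $d_{k,l}>0$ for all $l\in\{1,\ldots,r\}$; in particular $\eta_k\in\Omega$. (2) For $i\in\{1,\ldots,n\}$, let $l\in\{1,\ldots,r\}$ be the unique index with $\sum_{j=0}^{l-1}d_{k,j}<i\leq\sum_{j=1}^ld_{k,j}$. Then $f_k(v_i)+r_i\leq f_k\big((\sum_{j\text{ even},j\leq l}d_{k,j}+1)(n,n+1)\big)$ if $z_k=1$, $l$ odd; $f_k(v_i)+r_i\leq f_k\big((\sum_{j\text{ odd},j\leq l}d_{k,j}+1)(1,0)\big)$ if $z_k=1$, $l$ even; $f_k(v_i)+r_i\leq f_k\big((\sum_{j\text{ even},j\leq l}d_{k,j}+1)(1,0)\big)$ if $z_k=0$, $l$ odd; $f_k(v_i)+r_i\leq f_k\big((\sum_{j\text{ odd},j\leq l}d_{k,j}+1)(n,n+1)\big)$ if $z_k=0$, $l$ even. (3) If $i,i'$ are positive integers with $\sum_{j=0}^{l-1}d_{k,j}<i<i'\leq\sum_{j=0}^ld_{k,j}$ for some $l\in\{1,\ldots,r\}$, then $f_k(v_i)+r_i\leq f_k(v_{i'})+r_{i'}$. (4) For all $1\leq i<i'\leq n$, $f_k(v_i+r_i(1,1))\leq f_k(v_{i'}+r_{i'}(1,1))$. (5) If $l>2$ and $f_k(v_l+r_l(1,1))=f_k(v_{l-1}+r_{l-1}(1,1))$,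 then $f_k(v_l+r_l(1,1))\geq f_k(v_{l-2}+r_{l-2}(1,1))+2$.
   Context: $f_k(v)=kv_1+(1-k)v_2$ for $v\in\mathbb N^2$ (so $f_k((1,0))=k$, $f_k((n,n+1))=n+1-k$). $\Omega$ is the set of $\eta=(z,d_0,\ldots,d_r)$ with $z\in\{0,1\}$, $d_0=0$, $d_i\geq1$ ($1\leq i\leq r$), $\sum d_i=n$. For $j\in\{1,\ldots,n\}$, $t$ is unique with $\sum_{i<t}d_i<j\leq\sum_{i\leq t}d_i$, $c=j-\sum_{i<t}d_i$; $v_{j,\eta}=(\sum_{i\text{ odd},i<t}d_i+c,0)$ if $z=1,t$ odd; $(0,\sum_{i\text{ even},i<t}d_i+c)$ if $z=1,t$ even; $(0,\sum_{i\text{ odd},i<t}d_i+c)$ if $z=0,t$ odd; $(\sum_{i\text{ even},i<t}d_i+c,0)$ if $z=0,t$ even; $r_{j,\eta}=n\cdot\pi_2(v_{j,\eta})$. Construction of $\eta_k$: $z_k=1$ if $k\leq n+1-k$, else $z_k=0$; $d_{k,0}=0$; for $l\geq1$ with $O_l=\sum_{j\text{ odd},j\leq l-1}d_{k,j}$, $E_l=\sum_{j\text{ even},j\leq l-1}d_{k,j}$: $t_l=\max\{m\in\mathbb N:mk\leq(E_l+1)(n+1-k)\}$ ($z_k=1$, $l$ odd), $\max\{m:m(n+1-k)\leq(O_l+1)k\}$ ($z_k=1$, $l$ even), $\max\{m:m(n+1-k)\leq(E_l+1)k\}$ ($z_k=0$, $l$ odd), $\max\{m:mk\leq(O_l+1)(n+1-k)\}$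 ($z_k=0$, $l$ even); $s_1=0$, $s_l=O_l$ for odd $l>1$, $s_l=E_l$ for even $l$; $d_{k,l}=\min\{n-\sum_{j=0}^{l-1}d_{k,j},t_l-s_l\}$; the process stops at the first $r$ with $\sum_{j=1}^rd_{k,j}=n$. *)

(* Defs.v *)
From mathcomp Require Import all_boot all_order all_algebra.
Set Implicit Arguments. Unset Strict Implicit. Unset Printing Implicit Defensive.
Import Order.TTheory GRing.Theory Num.Theory.

Definition fk (k : nat) (v : nat * nat) : int :=
  (k%:Z * v.1%:Z + (1 - k%:Z) * v.2%:Z)%R.

(* eta = (z, d_0, ..., d_r) is represented by z : bool (true = 1) and the
   sequence ds = [:: d_0; ...; d_r]. *)

Definition psumlt (ds : seq nat) (t : nat) : nat := \sum_(i < t) nth 0 ds i.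
Definition oddsum (ds : seq nat) (t : nat) : nat :=
  \sum_(i < t | odd i) nth 0 ds i.
Definition evensum (ds : seq nat) (t : nat) : nat :=
  \sum_(i < t | ~~ odd i) nth 0 ds i.

Definition Omega (n : nat) (z : bool) (ds : seq nat) : Prop :=
  [/\ 0 < size ds, nth 0 ds 0 = 0,
      (forall i, 0 < i < size ds -> 1 <= nth 0 ds i)
    & \sum_(i <- ds) i = n].

(* the index t with sum_{i<t} d_i < j <= sum_{i<=t} d_i (the first t with
   j <= sum_{i <= t} d_i) *)
Definition tidx (ds : seq nat) (j : nat) : nat :=
  find (fun t => j <= psumlt ds t.+1) (iota 0 (size ds)).

Definition vvec (z : bool) (ds : seq nat) (j : nat) : nat * nat :=
  let t := tidx ds j in
  let c := j - psumlt ds t in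
  if z then
    (if odd t then (oddsum ds t + c, 0) else (0, evensum ds t + c))
  else
    (if odd t then (0, oddsum ds t + c) else (evensum ds t + c, 0)).

Definition rr (n : nat) (z : bool) (ds : seq nat) (j : nat) : nat :=
  n * (vvec z ds j).2.

(* max { m in N : m * a <= b }  (for a >= 1 such m satisfy m <= b) *)
Definition tmax (a b : nat) : nat := \max_(m < b.+1 | m * a <= b) m.

Definition zk (n k : nat) : bool := k <= n.+1 - k.

(* given s = [:: d_0; ...; d_{l-1}], compute d_l (l = size s >= 1) *)
Definition dnext (n k : nat) (s : seq nat) : nat :=
  let l := size s in
  let O := \sum_(j < l | odd j) nth 0 s j in
  let E := \sum_(j < l | ~~ odd j) nth 0 s j in
  let t := if zk n k then
             (if odd l then tmax k ((E + 1) * (n.+1 - k))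
              else tmax (n.+1 - k) ((O + 1) * k))
           else
             (if odd l then tmax (n.+1 - k) ((E + 1) * k)
              else tmax k ((O + 1) * (n.+1 - k))) in
  let sl := if l == 1 then 0 else if odd l then O else E in
  minn (n - \sum_(j < l) nth 0 s j) (t - sl).

Fixpoint dlist (n k l : nat) : seq nat :=
  match l with
  | 0 => [:: 0]
  | l'.+1 => let s := dlist n k l' in rcons s (dnext n k s)
  end.

Definition dk (n k l : nat) : nat := nth 0 (dlist n k l) l.

Definition etad (n k r : nat) : seq nat := [seq dk n k j | j <- iota 0 r.+1].

(* Main.v *)
Require Import Defs.
From mathcomp Require Import all_boot all_order all_algebra zify ring.
Import Order.TTheory GRing.Theory Num.Theory.
Lemma tmaxE a b : 0 < a -> tmax a b = b %/ a.
Proof.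
move=> a0; apply/eqP; rewrite eqn_leq; apply/andP; split.
  apply/bigmax_leqP => i /= hi; by rewrite leq_divRL.
have hb : b %/ a < b.+1 by rewrite ltnS leq_div.
apply: (@leq_bigmax_cond _ (fun m : 'I_b.+1 => m * a <= b) (fun m : 'I_b.+1 => (m : nat)) (Ordinal hb)).
by rewrite /= leq_divM.
Qed.

Lemma size_dlist n k l : size (dlist n k l) = l.+1.
Proof. by elim: l => //= l IH; rewrite size_rcons IH. Qed.

Lemma nth_dlist n k l j : j <= l -> nth 0 (dlist n k l) j = dk n k j.
Proof.
move=> hj; rewrite /dk -(subnK hj); elim: (l - j) => //= i IH.
by rewrite nth_rcons size_dlist ltnS leq_addl IH.
Qed.

Lemma dk_S n k l : dk n k l.+1 = dnext n k (dlist n k l).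
Proof. by rewrite /dk /= nth_rcons size_dlist ltnn eqxx. Qed.

Lemma find_eq (X : Type) (p : pred X) (s : seq X) x0 l :
  l < size s -> p (nth x0 s l) -> (forall j, j < l -> ~~ p (nth x0 s j)) ->
  find p s = l.
Proof.
move=> hl hp hb; case: (ltngtP (find p s) l) => // h.
  have hs : has p s by apply/(has_nthP x0); exists l.
  by have := nth_find x0 hs; have := hb _ h => /negbTE ->.
by have := before_find x0 h; rewrite hp.
Qed.

Section A.
Variables n k : nat.
Hypothesis hn : 1 <= n.
Hypothesis hk : 1 <= k <= n.

Definition d j := dk n k j.
Definition Sm t := \sum_(j < t) d j.
Definition Od t := \sum_(j < t | odd j) d j.
Definition Ev t := \sum_(j < t | ~~ odd j) d j.
Definition z := zk n k.
Definition m := n.+1 - k.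
Definition P l := if z == odd l then k else m.
Definition Q l := if z == odd l then m else k.
Definition cnt l := if odd l then Od l else Ev l.
Definition cnt' l := if odd l then Ev l else Od l.
Definition T l := (cnt' l + 1) * Q l %/ P l.

Lemma d0 : d 0 = 0. Proof. by []. Qed.

Lemma Sm_S t : Sm t.+1 = Sm t + d t.
Proof. by rewrite /Sm big_ord_recr. Qed.
Lemma Od_S t : Od t.+1 = Od t + (if odd t then d t else 0).
Proof. by rewrite /Od big_mkcond big_ord_recr /= -big_mkcond. Qed.
Lemma Ev_S t : Ev t.+1 = Ev t + (if odd t then 0 else d t).
Proof. by rewrite /Ev big_mkcond big_ord_recr /= -big_mkcond /=; case: (odd t). Qed.
Lemma cnt_S t : cnt t.+1 = cnt' t.
Proof. rewrite /cnt /cnt' Od_S Ev_S /=; case: (odd t) => /=; lia. Qed.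
Lemma cnt'_S t : cnt' t.+1 = cnt t + d t.
Proof. rewrite /cnt /cnt' Od_S Ev_S /=; case: (odd t) => /=; lia. Qed.
Lemma P_S t : P t.+1 = Q t.
Proof. rewrite /P /Q /=; by case: z; case: (odd t). Qed.
Lemma Q_S t : Q t.+1 = P t.
Proof. rewrite /P /Q /=; by case: z; case: (odd t). Qed.
Lemma P_pos l : 0 < P l.
Proof. rewrite /P /m; case: ifP => _; lia. Qed.
Lemma Q_pos l : 0 < Q l.
Proof. rewrite /Q /m; case: ifP => _; lia. Qed.

Lemma sums_dlist l (F : nat -> bool) :
  \sum_(j < l.+1 | F j) nth 0 (dlist n k l) j = \sum_(j < l.+1 | F j) d j.
Proof. apply: eq_bigr => j _; by rewrite nth_dlist // -ltnS. Qed.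

Lemma d_rec l : 0 < l -> d l = minn (n - Sm l) (T l - cnt l).
Proof.
case: l => // l _.
rewrite /d dk_S /dnext size_dlist.
have h1 := sums_dlist l (fun j => odd j).
have h2 := sums_dlist l (fun j => ~~ odd j).
have h3 := sums_dlist l (fun j => true).
rewrite h1 h2 h3 -/(Od l.+1) -/(Ev l.+1) -/(Sm l.+1).
rewrite /T /cnt /cnt' /P /Q -/z.
have hO1 : l = 0 -> Od 1 = 0 by move=> _; rewrite Od_S /Od big_ord0.
case: z; case hl: (odd l.+1); rewrite /= ?tmaxE //; try lia.
all: case: (l =P 0) => [e|ne]; [subst l; by rewrite /= ?hO1 in hl * |].
all: have -> : (l.+1 == 1) = false by apply/eqP; lia.
all: by [].
Qed.

Lemma Sm_le t : Sm t <= n.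
Proof.
elim: t => [|t IH]; first by rewrite /Sm big_ord0.
rewrite Sm_S; case: t IH => [|t] IH; first by rewrite d0 addn0.
rewrite d_rec //; lia.
Qed.

Lemma Sm_mono t t' : t <= t' -> Sm t <= Sm t'.
Proof.
elim: t' => [|t' IH]; first by rewrite leqn0 => /eqP ->.
rewrite leq_eqVlt => /orP [/eqP -> //| h].
rewrite Sm_S; have := IH h; lia.
Qed.

Lemma Sm1 : Sm 1 = 0.
Proof. by rewrite Sm_S /Sm big_ord0. Qed.

Lemma cnt1 : cnt 1 = 0.
Proof. by rewrite /cnt /= Od_S /Od big_ord0. Qed.
Lemma cnt'1 : cnt' 1 = 0.
Proof. by rewrite /cnt' /= Ev_S /Ev big_ord0. Qed.

Lemma Inv l : 0 < l -> Sm l < n -> (cnt l + 1) * P l <= (cnt' l + 1) * Q l.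
Proof.
elim: l => // l IH _.
case: l IH => [|l] IH.
  move=> _; rewrite cnt1 cnt'1 /P /Q /z /zk /m /=.
  case: ifP; lia.
move=> hS.
have hS' : Sm l.+1 < n by have := Sm_mono _ _ (leqnSn l.+1); lia.
have hinv := IH isT hS'.
have hd := d_rec _ (ltn0Sn l).
have hP := P_pos l.+1.
rewrite Sm_S in hS.
rewrite (cnt_S l.+1) (cnt'_S l.+1) (P_S l.+1) (Q_S l.+1).
move: hd; rewrite /T.
set X := (cnt' l.+1 + 1) * Q l.+1.
move=> hd.
have hle : cnt l.+1 + 1 <= X %/ P l.+1 by rewrite leq_divRL.
have := ltn_ceil X hP.
move: hle hd; generalize (X %/ P l.+1) => Y.
generalize X (P l.+1) => X' P'.
nia.
Qed.

Lemma dpos l : 0 < l -> Sm l < n -> 0 < d l /\ cnt l + d l <= T l.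
Proof.
move=> l0 hS; have hi := Inv l l0 hS.
have hP := P_pos l.
have hle : cnt l + 1 <= T l by rewrite /T leq_divRL.
have := d_rec l l0; move: hle; rewrite /T; generalize ((cnt' l + 1) * Q l %/ P l) => Y.
lia.
Qed.

Lemma bbound l : 0 < l -> Sm l < n -> (cnt l + d l) * P l <= (cnt' l + 1) * Q l.
Proof.
move=> l0 hS; have [_ h] := dpos l l0 hS; apply: leq_trans (leq_divM ((cnt' l + 1) * Q l) (P l)).
by rewrite leq_mul2r h orbT.
Qed.

Lemma Sm_big t : minn n t <= Sm t.+1.
Proof.
elim: t => [|t IH]; first by rewrite minn0.
rewrite Sm_S.
case: (ltnP (Sm t.+1) n) => h.
  have [h1 _] := dpos _ (ltn0Sn t) h. lia.
lia.
Qed.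

Lemma Sm_n : Sm n.+1 = n.
Proof. have := Sm_big n; have := Sm_le n.+1; rewrite minnn; lia. Qed.

Lemma d1_small : (k < 2) || (m < 2) -> d 1 = n.
Proof.
move=> h; rewrite d_rec // Sm1 cnt1 /T cnt'1 /P /Q /z /zk /m -/m /=.
move: h; rewrite /m; case: ifP => h1 h2.
  have -> : k = 1 by lia.
  by rewrite divn1 mul1n; lia.
have -> : n.+1 - k = 1 by lia.
by rewrite divn1 mul1n; lia.
Qed.

Variable r : nat.
Hypothesis hr : Sm r.+1 = n.
Hypothesis hmin : forall r', r' < r -> Sm r'.+1 <> n.

Definition dsq := etad n k r.

Lemma nth_ds j : nth 0 dsq j = if j <= r then d j else 0.
Proof.
rewrite /dsq /etad; case: leqP => h.
  by rewrite (nth_map 0) ?size_iota // nth_iota.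
by rewrite nth_default // size_map size_iota.
Qed.

Lemma psumlt_ds t : t <= r.+1 -> psumlt dsq t = Sm t.
Proof.
move=> ht; apply: eq_bigr => i _; rewrite nth_ds; case: leqP => //; have := ltn_ord i; lia.
Qed.
Lemma oddsum_ds t : t <= r.+1 -> oddsum dsq t = Od t.
Proof.
move=> ht; apply: eq_bigr => i _; rewrite nth_ds; case: leqP => //; have := ltn_ord i; lia.
Qed.
Lemma evensum_ds t : t <= r.+1 -> evensum dsq t = Ev t.
Proof.
move=> ht; apply: eq_bigr => i _; rewrite nth_ds; case: leqP => //; have := ltn_ord i; lia.
Qed.

Lemma SmL l : l <= r -> Sm l < n.
Proof.
case: l => [|l] h; first by rewrite /Sm big_ord0.
have := hmin _ h; have := Sm_le l.+1; lia.
Qed.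



Definition Fz i := (fk k (vvec (zk n k) dsq i) + (rr n (zk n k) dsq i)%:Z)%R.

Lemma tidx_blk l i : 0 < l <= r -> Sm l < i <= Sm l.+1 -> tidx dsq i = l.
Proof.
move=> /andP [l0 lr] /andP [h1 h2]; rewrite /tidx.
have -> : size dsq = r.+1 by rewrite size_map size_iota.
apply: (@find_eq _ _ _ 0).
- by rewrite size_iota ltnS.
- by rewrite nth_iota ?ltnS //= add0n psumlt_ds.
move=> j jl; rewrite nth_iota ?add0n; last by lia.
rewrite psumlt_ds; last by lia.
have := Sm_mono _ _ jl; lia.
Qed.

Lemma F_val l i : 0 < l <= r -> Sm l < i <= Sm l.+1 ->
  Fz i = ((P l * (cnt l + (i - Sm l)))%:Z)%R.
Proof.
move=> hl hi; rewrite /Fz /rr /vvec (tidx_blk _ _ hl hi).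
have hl' : l <= r.+1 by lia.
rewrite psumlt_ds // oddsum_ds // evensum_ds //.
rewrite /P /cnt /z /m; case: (zk n k); case: (odd l) => /=; rewrite /fk /=; lia.
Qed.


Lemma locate i : 0 < i <= n -> exists2 l, 0 < l <= r & Sm l < i <= Sm l.+1.
Proof.
move=> /andP [i0 iN].
have ex : exists t, i <= Sm t.+1 by exists r; rewrite hr.
case: (ex_minnP ex) => l hl hm.
exists l.
  case: l hl hm => [|l] hl hm; first by move: hl; rewrite Sm1; lia.
  by rewrite /= hm // hr.
rewrite hl andbT.
case: l hl hm => [|l] hl hm; first by move: hl; rewrite Sm1; lia.
rewrite ltnNge; apply/negP => h; have := hm _ h; lia.
Qed.

Definition Gz i := fk k ((vvec (zk n k) dsq i).1 + rr n (zk n k) dsq i,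
                        (vvec (zk n k) dsq i).2 + rr n (zk n k) dsq i).

Lemma GF i : Gz i = Fz i.
Proof. rewrite /Gz /Fz /fk /= !PoszD; ring. Qed.

Lemma c1 l : 0 < l <= r -> 0 < d l.
Proof. move=> /andP [h1 h2]; by have [] := dpos _ h1 (SmL _ h2). Qed.

Lemma c2 i l : 1 <= i <= n -> 1 <= l <= r ->
       psumlt dsq l < i <= psumlt dsq l.+1 ->
       (Fz i <= (if zk n k then
                  (if odd l then
                     fk k ((evensum dsq l.+1 + 1) * n,
                           (evensum dsq l.+1 + 1) * n.+1)
                   else fk k (oddsum dsq l.+1 + 1, 0))
                else
                  (if odd l then fk k (evensum dsq l.+1 + 1, 0)
                   else fk k ((oddsum dsq l.+1 + 1) * n,
                              (oddsum dsq l.+1 + 1) * n.+1))))%R.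
Proof.
move=> hi hl.
have hl1 : l <= r.+1 by lia.
have hl2 : l.+1 <= r.+1 by lia.
rewrite psumlt_ds // psumlt_ds // => hb.
rewrite (F_val _ _ hl hb) oddsum_ds // evensum_ds //.
have hbb := bbound _ (proj1 (andP hl)) (SmL _ (proj2 (andP hl))).
have hc : i - Sm l <= d l by move: hb; rewrite Sm_S; lia.
have hP := P_pos l.
have h3 : P l * (cnt l + (i - Sm l)) <= (cnt' l + 1) * Q l.
  apply: leq_trans hbb; rewrite mulnC leq_mul2r; apply/orP; right; lia.
move: h3; rewrite Od_S Ev_S /cnt' /Q /m /z.
case: (zk n k); case: (odd l) => /=; rewrite /fk /= => h3; nia.
Qed.

Lemma c3 i i' l : 0 < i -> 0 < i' -> 1 <= l <= r ->
       psumlt dsq l < i -> i < i' -> i' <= psumlt dsq l.+1 ->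
       (Fz i <= Fz i')%R.
Proof.
move=> i0 i'0 hl.
have hl1 : l <= r.+1 by lia.
have hl2 : l.+1 <= r.+1 by lia.
rewrite psumlt_ds // psumlt_ds // => h1 h2 h3.
rewrite (F_val l i hl) ?(F_val l i' hl); try lia.
rewrite lez_nat leq_mul2l; apply/orP; right; lia.
Qed.


Lemma last_first l i : 0 < l <= r -> i = Sm l.+1 -> i < n ->
  [/\ l < r, Fz i = ((P l * (cnt l + d l))%:Z)%R &
      Fz i.+1 = ((Q l * (cnt' l + 1))%:Z)%R].
Proof.
move=> hl hi hin.
have lr : l < r.
  rewrite ltn_neqAle (proj2 (andP hl)) andbT; apply/eqP => e; subst l; lia.
have [dp _] := dpos l.+1 isT (SmL _ lr).
have hl0 : 0 < l by case/andP: hl.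
split => //.
  rewrite (F_val l i hl); last by rewrite hi Sm_S; have [] := dpos l hl0 (SmL _ (ltnW lr)); lia.
  by rewrite hi Sm_S addKn.
rewrite (F_val l.+1 i.+1); first last.
- by rewrite hi (Sm_S l.+1); lia.
- by rewrite /= lr.
by rewrite P_S cnt_S hi subSnn.
Qed.

Lemma step i : 0 < i -> i < n -> (Fz i <= Fz i.+1)%R.
Proof.
move=> i0 iN.
have [l hl hb] := locate i (ltac:(lia)).
case: (leqP i.+1 (Sm l.+1)) => h.
  rewrite (F_val l i hl hb) (F_val l i.+1 hl); last by lia.
  rewrite lez_nat leq_mul2l; apply/orP; right; lia.
have e : i = Sm l.+1 by lia.
have [lr -> ->] := last_first _ _ hl e iN.
rewrite lez_nat.
have := bbound l (proj1 (andP hl)) (SmL _ (proj2 (andP hl))); lia.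
Qed.

Lemma c4 i i' : 1 <= i -> i < i' -> i' <= n -> (Gz i <= Gz i')%R.
Proof.
rewrite !GF => i0; elim: i' => // i' IH hii' hi'n.
rewrite ltnS leq_eqVlt in hii'; case/orP: hii' => [/eqP e|h]; first subst i'.
  apply: step; lia.
apply: le_trans (IH h (ltnW hi'n)) _; apply: step; lia.
Qed.

Lemma r2 : 1 < r -> 2 <= P 0 /\ 2 <= Q 0.
Proof.
move=> h.
have hk2 : ~~ ((k < 2) || (m < 2)).
  apply/negP => /d1_small e; apply: (hmin _ h); rewrite Sm_S Sm1 e //.
rewrite /P /Q; case: ifP => _; lia.
Qed.

Lemma PQ2 l : 1 < r -> 2 <= P l /\ 2 <= Q l.
Proof.
move=> h; have := r2 h; rewrite /P /Q; case: ifP; case: ifP => _ _; lia.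
Qed.

Lemma c5 l : 2 < l -> l <= n -> Gz l = Gz l.-1 -> (Gz l.-2 + 2 <= Gz l)%R.
Proof.
rewrite !GF; case: l => [|[|[|j]]] // _ hn' /=.
have [l0 hl hb] := locate j.+2 (ltac:(lia)).
case: (leqP j.+3 (Sm l0.+1)) => h.
  rewrite (F_val l0 j.+2 hl hb) (F_val l0 j.+3 hl); last by lia.
  have := P_pos l0; case=> e. nia.
have e : j.+2 = Sm l0.+1 by lia.
have [lr h1 h2] := last_first _ _ hl e (ltac:(lia)).
rewrite h2 h1 => -[] he.
have [hP hQ] := PQ2 l0 (ltac:(lia)).
case: (ltnP (Sm l0) j.+1) => h'.
  rewrite (F_val l0 j.+1 hl); last by lia.
  rewrite he; have e' := e; rewrite Sm_S in e'.
  have : 0 < d l0 by lia.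
  move: e' hP h'; generalize (d l0) (P l0) (cnt l0) (Sm l0) => D P' C S'.
  move=> *; nia.
have e2 : Sm l0 = j.+1 by lia.
case: l0 hl hb h1 h2 h e lr he hP hQ h' e2 => [|[|l1]] hl hb h1 h2 h e lr he hP hQ h' e2 //.
  by rewrite Sm1 in e2.
have hl1 : 0 < l1.+1 <= r by lia.
have [dp _] := dpos l1.+1 isT (SmL _ (proj2 (andP hl1))).
rewrite (F_val l1.+1 j.+1 hl1); last by rewrite -e2 (Sm_S l1.+1); lia.
rewrite -e2 (Sm_S l1.+1) addKn Q_S cnt'_S.
rewrite (Q_S l1.+1) in hQ.
rewrite lez_nat; nia.
Qed.

End A.

Theorem lemma3p7 (n k : nat) (hn : 1 <= n) (hk : 1 <= k <= n) :
  exists r : nat,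
    (* r is the first index at which the process stops *)
    (\sum_(1 <= j < r.+1) dk n k j = n /\
     (forall r', r' < r -> \sum_(1 <= j < r'.+1) dk n k j <> n)) /\
    let z := zk n k in
    let ds := etad n k r in
    let F := fun i => (fk k (vvec z ds i) + (rr n z ds i)%:Z)%R in
    let G := fun i => fk k ((vvec z ds i).1 + rr n z ds i,
                            (vvec z ds i).2 + rr n z ds i) in
    (* (1) *)
    ((forall l, 1 <= l <= r -> 0 < dk n k l) /\ Omega n z ds) /\
    (* (2) *)
    (forall i l, 1 <= i <= n -> 1 <= l <= r ->
       psumlt ds l < i <= psumlt ds l.+1 ->
       (F i <= (if z then
                  (if odd l then
                     fk k ((evensum ds l.+1 + 1) * n,
                           (evensum ds l.+1 + 1) * n.+1)
                   else fk k (oddsum ds l.+1 + 1, 0))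
                else
                  (if odd l then fk k (evensum ds l.+1 + 1, 0)
                   else fk k ((oddsum ds l.+1 + 1) * n,
                              (oddsum ds l.+1 + 1) * n.+1))))%R) /\
    (* (3) *)
    (forall i i' l, 0 < i -> 0 < i' -> 1 <= l <= r ->
       psumlt ds l < i -> i < i' -> i' <= psumlt ds l.+1 ->
       (F i <= F i')%R) /\
    (* (4) *)
    (forall i i', 1 <= i -> i < i' -> i' <= n -> (G i <= G i')%R) /\
    (* (5) *)
    (forall l, 2 < l -> l <= n -> G l = G l.-1 ->
       (G l.-2 + 2 <= G l)%R).
Proof.
have ex : exists r, Sm n k r.+1 == n by exists n; rewrite Sm_n.
case: (ex_minnP ex) => r /eqP hr hmin.
have hmin' : forall r', r' < r -> Sm n k r'.+1 <> n.
  by move=> r' h e; have := hmin r' (introT eqP e); lia.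
have sum1 : forall t, \sum_(1 <= j < t.+1) dk n k j = Sm n k t.+1.
  move=> t; rewrite /Sm -(@big_mkord _ _ _ t.+1 (fun _ => true) (d n k)).
  by rewrite (big_ltn (ltn0Sn t)) d0 add0n.
exists r; split.
  split; first by rewrite sum1.
  by move=> r' h; rewrite sum1; exact: hmin'.
move=> z ds F G.
split; [split|split; [|split; [|split]]].
- by move=> l hl; exact: (c1 n k hn hk r hr hmin' l hl).
- split.
  + by rewrite /ds /etad size_map size_iota.
  + by [].
  + move=> i /andP [i0 ir]; rewrite /ds size_map size_iota in ir.
    have e : nth 0 ds i = d n k i by rewrite /ds -/(dsq n k r) nth_ds -ltnS ir.
    rewrite e; apply: (c1 n k hn hk r hr hmin'); by rewrite i0 -ltnS.
  + rewrite /ds /etad big_map -[X in \sum_(_ <- X) _]/(index_iota 0 r.+1).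
    rewrite (@big_mkord _ _ _ r.+1 (fun _ => true) (dk n k)).
    exact: hr.
- exact: (c2 n k hn hk r hr hmin').
- exact: (c3 n k hn hk r hr).
- move=> i i' h1 h2 h3; have H := c4 n k hn hk r hr hmin' i i' h1 h2 h3; move: H; rewrite /Gz /dsq /G /ds /z. exact: id.
- move=> l h1 h2; rewrite /G /ds /z; move: (c5 n k hn hk r hr hmin' l h1 h2); rewrite /Gz /dsq; exact: id.
Qed.
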